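(* Let $R$ be a ring, $*\in\{l,r,\emptyset\}$, and $S_1,\dots,S_n\in\mathbb{L}_*(R)$. Let $\mathfrak{p}_i=\mathrm{ass}_R(S_i)$, $R_i=R/\mathfrak{p}_i$, and $Q_i=R\langle S_i^{-1}\rangle$ the localization of $R$ at $S_i$. Suppose the rings $Q_i$ are simple Artinian, $\bigcap_{i=1}^n\mathfrak{p}_i=0$, and $\bigcap_{j\neq i}\mathfrak{p}_j\neq0$ for each $i=1,\dots,n$. Then \begin{enumerate} \item the rings $R_i$ are semiprime $*$ Goldie rings; \item $\min(R)=\{\mathfrak{p}_1,\dots,\mathfrak{p}_n\}$; \item $Q_i\simeq Q_{*,cl}(R_i)$ for $i=1,\dots,n$ (an $R$-isomorphism); \item $S_i\subseteq\mathcal{C}(\mathfrak{p}_i)$ for $i=1,\dots,n$; \item $Q_{*,cl}(R)\simeq\prod_{i=1}^nQ_i$; \item $\mathcal{C}(\mathfrak{p}_i)\in\max\mathbb{L}_*(R)$ for all $i=1,\dots,n$. \end{enumerate}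
   Context: Rings are associative with $1$. Multiplicative set: $SS\subseteq S$, $1\in S$, $0\notin S$. $R\langle S^{-1}\rangle=R\langle X_S\rangle/I_S$ ($R\langle X_S\rangle$ freely generated by $R$ and noncommuting $x_s$; $I_S$ generated by $sx_s-1,x_ss-1$); $\mathrm{ass}_R(S)=\ker(R\to R\langle S^{-1}\rangle)$. Left (resp. right) localizable: $R\langle S^{-1}\rangle\ne0$ and each element has the form $(x_s+I_S)(r+I_S)$ (resp. $(r+I_S)(x_s+I_S)$); localizable: both; $\mathbb{L}_l,\mathbb{L}_r,\mathbb{L}_\emptyset$ are these sets, $\max$ denotes maximal elements w.r.t. inclusion. ''$*$ Goldie'' means left Goldie, right Goldie, or (two-sided) Goldie for $*=l,r,\emptyset$. $Q_{l,cl}(A)=\mathcal{C}_A^{-1}A$, $Q_{r,cl}(A)=A\mathcal{C}_A^{-1}$, $Q_{\emptyset,cl}(A)$ the classical two-sided quotient ring, where $\mathcal{C}_A$ is the set of regular elements. $\min(R)$ is the set of minimal primes; $\mathcal{C}(\mathfrak{p})=\{c\in R:c+\mathfrak{p}\in\mathcal{C}_{R/\mathfrak{p}}\}$. *)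

(* Defs.v *)
(* Noncommutative rings = pzRingType (associative, with 1;
   the zero ring is allowed). Subsets / ideals are Prop-valued predicates. *)
From HB Require Import structures.
From mathcomp Require Import all_boot all_order all_algebra.
Set Implicit Arguments. Unset Strict Implicit. Unset Printing Implicit Defensive.
Import GRing.Theory.
Local Open Scope ring_scope.

(* the parameter * in {l, r, empty} *)
Inductive side := sideL | sideR | sideLR.

Section RingDefs.
Variable T : pzRingType.

Definition invertible (x : T) := exists y : T, x * y = 1 /\ y * x = 1.

Definition mult_set (S : T -> Prop) :=
  S 1 /\ ~ S 0 /\ (forall s t, S s -> S t -> S (s * t)).

Definition left_ideal (I : T -> Prop) :=
  I 0 /\ (forall x y, I x -> I y -> I (x + y)) /\ (forall x, I x -> I (- x))
  /\ (forall r x, I x -> I (r * x)).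
Definition right_ideal (I : T -> Prop) :=
  I 0 /\ (forall x y, I x -> I y -> I (x + y)) /\ (forall x, I x -> I (- x))
  /\ (forall r x, I x -> I (x * r)).
Definition ideal (I : T -> Prop) := left_ideal I /\ right_ideal I.

Definition left_artinian :=
  forall I : nat -> T -> Prop, (forall k, left_ideal (I k)) ->
    (forall k x, I k.+1 x -> I k x) ->
    exists m, forall k, (m <= k)%N -> forall x, I k x <-> I m x.

Definition simple_ring :=
  (1 : T) <> 0 /\
  forall I, ideal I -> (forall x, I x -> x = 0) \/ (forall x, I x).

Definition simple_artinian := simple_ring /\ left_artinian.

Definition semiprime :=
  forall A, ideal A -> (forall a b, A a -> A b -> a * b = 0) ->
    forall a, A a -> a = 0.

Definition prime_ideal (P : T -> Prop) :=
  ideal P /\ (exists x, ~ P x) /\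
  forall A B, ideal A -> ideal B -> (forall a b, A a -> B b -> P (a * b)) ->
    (forall a, A a -> P a) \/ (forall b, B b -> P b).

Definition minimal_prime (P : T -> Prop) :=
  prime_ideal P /\
  forall P', prime_ideal P' -> (forall x, P' x -> P x) -> forall x, P x -> P' x.

Definition lann (X : T -> Prop) : T -> Prop := fun r => forall x, X x -> r * x = 0.
Definition rann (X : T -> Prop) : T -> Prop := fun r => forall x, X x -> x * r = 0.

Definition acc_lann :=
  forall X : nat -> T -> Prop,
    (forall k x, lann (X k) x -> lann (X k.+1) x) ->
    exists m, forall k, (m <= k)%N -> forall x, lann (X k) x <-> lann (X m) x.
Definition acc_rann :=
  forall X : nat -> T -> Prop,
    (forall k x, rann (X k) x -> rann (X k.+1) x) ->
    exists m, forall k, (m <= k)%N -> forall x, rann (X k) x <-> rann (X m) x.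

Definition independent (I : nat -> T -> Prop) :=
  forall (m : nat) (x : nat -> T), (forall k, (k < m)%N -> I k (x k)) ->
    \sum_(k < m) x k = 0 -> forall k, (k < m)%N -> x k = 0.

(* finite uniform dimension: no infinite direct sum of nonzero one-sided ideals *)
Definition left_finite_udim :=
  ~ exists I : nat -> T -> Prop, (forall k, left_ideal (I k)) /\
      (forall k, exists x, I k x /\ x <> 0) /\ independent I.
Definition right_finite_udim :=
  ~ exists I : nat -> T -> Prop, (forall k, right_ideal (I k)) /\
      (forall k, exists x, I k x /\ x <> 0) /\ independent I.

Definition left_goldie := acc_lann /\ left_finite_udim.
Definition right_goldie := acc_rann /\ right_finite_udim.

Definition goldie (sd : side) :=
  match sd with
  | sideL => left_goldie
  | sideR => right_goldie
  | sideLR => left_goldie /\ right_goldie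
  end.

Definition regular (c : T) := forall a, (a * c = 0 -> a = 0) /\ (c * a = 0 -> a = 0).

(* C(p) = { c : c + p regular in T/p }, written out elementwise *)
Definition cset (p : T -> Prop) : T -> Prop :=
  fun c => forall a, (p (a * c) -> p a) /\ (p (c * a) -> p a).
End RingDefs.

Section Loc.
Variables (R : pzRingType).

Definition left_frac (S : R -> Prop) (Q : pzRingType) (phi : R -> Q) (q : Q) :=
  exists s r y, S s /\ phi s * y = 1 /\ y * phi s = 1 /\ q = y * phi r.
Definition right_frac (S : R -> Prop) (Q : pzRingType) (phi : R -> Q) (q : Q) :=
  exists s r y, S s /\ phi s * y = 1 /\ y * phi s = 1 /\ q = phi r * y.

Definition frac_form (sd : side) (S : R -> Prop) (Q : pzRingType) (phi : R -> Q) :=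
  forall q : Q, match sd with
  | sideL => left_frac S phi q
  | sideR => right_frac S phi q
  | sideLR => left_frac S phi q /\ right_frac S phi q
  end.

(* (Q, phi) is the universal S-inverting ring R<S^{-1}> (universal property
   of R<X_S>/I_S, which determines it up to unique R-isomorphism) *)
Definition universal_loc (S : R -> Prop) (Q : pzRingType) (phi : {rmorphism R -> Q}) :=
  (forall s, S s -> invertible (phi s)) /\
  forall (T : pzRingType) (f : {rmorphism R -> T}),
    (forall s, S s -> invertible (f s)) ->
    exists g : {rmorphism Q -> T},
      (forall r, g (phi r) = f r) /\
      (forall g' : {rmorphism Q -> T}, (forall r, g' (phi r) = f r) -> forall q, g' q = g q).

Definition ass (Q : pzRingType) (phi : {rmorphism R -> Q}) : R -> Prop :=
  fun r => phi r = 0.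

Definition localizable (sd : side) (S : R -> Prop) (Q : pzRingType) (phi : {rmorphism R -> Q}) :=
  (1 : Q) <> 0 /\ frac_form sd S phi.

Definition inL (sd : side) (S : R -> Prop) :=
  mult_set S /\
  exists (Q : pzRingType) (phi : {rmorphism R -> Q}),
    universal_loc S phi /\ localizable sd S phi.

Definition classical_quotient (sd : side) (Q : pzRingType) (j : {rmorphism R -> Q}) :=
  injective j /\ (forall c, regular c -> invertible (j c)) /\
  frac_form sd (@regular R) j.
End Loc.

(* Main.v *)
Require Import Defs.
From HB Require Import structures.
From mathcomp Require Import all_boot all_order all_algebra.
From Stdlib Require Import Classical ClassicalEpsilon FunctionalExtensionality PropExtensionality.
Set Implicit Arguments. Unset Strict Implicit. Unset Printing Implicit Defensive.
Import GRing.Theory.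
Local Open Scope ring_scope.

Lemma idem_join (Q : pzRingType) (e f : Q) : e * e = e -> f * f = f -> f * e = 0 ->
 let e' := e + f - e * f in e' * e = e /\ e' * f = f /\ e' * e' = e' /\ f * e' = f.
Proof.
move=> ee ff fe e'.
have e'e : e' * e = e by rewrite /e' !mulrDl mulNr -mulrA !fe mulr0 ee subr0 addr0.
have e'f : e' * f = f by rewrite /e' !mulrDl mulNr -mulrA ff addrAC subrr add0r.
split => //; split => //; split.
  by rewrite {2}/e' !mulrDr mulrN e'e e'f mulrA e'e.
by rewrite /e' !mulrDr mulrN ff fe mulrA fe mul0r subr0 add0r.
Qed.

Lemma idem_join_r (Q : pzRingType) (e f : Q) : e * e = e -> f * f = f -> e * f = 0 ->
 let e' := e + f - f * e in e * e' = e /\ f * e' = f /\ e' * e' = e' /\ e' * f = f.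
Proof. exact: (@idem_join (GRing.converse Q) e f). Qed.

Section QCore.
Variable Q : pzRingType.
Hypothesis hA : left_artinian Q.

Definition subp (A B : Q -> Prop) := forall x, A x -> B x.

Lemma min_principle (F : (Q -> Prop) -> Prop) :
  (forall L, F L -> left_ideal L) -> (exists L, F L) ->
  exists L, F L /\ forall L', F L' -> subp L' L -> subp L L'.
Proof.
move=> FL [L0 FL0].
apply: NNPP => Hno.
have H : forall L, F L -> exists L', F L' /\ subp L' L /\ exists x, L x /\ ~ L' x.
  move=> L FLL; apply: NNPP => H1; apply: Hno; exists L; split => // L' FL' sL' x Lx.
  apply: NNPP => nL'; apply: H1; exists L'; split => //; split => //; exists x; split.
  done. done.
have H2 : forall L, exists L', F L -> F L' /\ subp L' L /\ exists x, L x /\ ~ L' x.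
  move=> L; case: (classic (F L)) => [FLL|nF].
    by have [L' HL'] := H L FLL; exists L' => _.
  by exists L => /nF.
pose nxt L := proj1_sig (constructive_indefinite_description _ (H2 L)).
have nxtP L : F L -> F (nxt L) /\ subp (nxt L) L /\ exists x, L x /\ ~ nxt L x.
  exact: (proj2_sig (constructive_indefinite_description _ (H2 L))).
pose I k := iter k nxt L0.
have FI k : F (I k) by elim: k => [|k IH] //=; have [] := nxtP _ IH.
have [m Hm] := hA (fun k => FL _ (FI k)) (fun k => proj1 (proj2 (nxtP _ (FI k)))).
have [_ [_ [x [Ix nIx]]]] := nxtP _ (FI m).
by apply: nIx; apply/(Hm m.+1 (leqnSn m)).
Qed.

Lemma left_reg_inv (a : Q) : (forall x, x * a = 0 -> x = 0) -> invertible a.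
Proof.
move=> Ha.
have canc k x : x * a ^+ k = 0 -> x = 0.
  elim: k x => [|k IH] x; first by rewrite expr0 mulr1.
  by rewrite exprSr mulrA => /Ha /IH.
pose I k := fun x : Q => exists q, x = q * a ^+ k.
have LI k : left_ideal (I k).
  split; first by exists 0; rewrite mul0r.
  split; first by move=> x y [q ->] [q' ->]; exists (q + q'); rewrite mulrDl.
  split; first by move=> x [q ->]; exists (- q); rewrite mulNr.
  by move=> r x [q ->]; exists (r * q); rewrite mulrA.
have dec k x : I k.+1 x -> I k x.
  by move=> [q ->]; exists (q * a); rewrite exprS mulrA.
have [m Hm] := hA LI dec.
have : I m (a ^+ m) by exists 1; rewrite mul1r.
move/(Hm m.+1 (leqnSn m)) => [z]; rewrite exprS mulrA => Hz.
have za : z * a = 1.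
  apply/eqP; rewrite -subr_eq0; apply/eqP; apply: (canc m).
  by rewrite mulrBl mul1r -Hz subrr.
exists z; split => //.
apply/eqP; rewrite -subr_eq0; apply/eqP; apply: Ha.
by rewrite mulrBl -mulrA za mulr1 mul1r subrr.
Qed.

Lemma li_rmul_inv (Z : Q -> Prop) (u v : Q) : left_ideal Z -> u * v = 1 -> v * u = 1 ->
  (forall z, Z z -> Z (z * u)) -> forall z, Z z -> Z (z * v).
Proof.
move=> [Z0 [ZD [ZN ZM]]] uv vu Zu.
have uvk k : u ^+ k * v ^+ k = 1.
  elim: k => [|k IH]; first by rewrite !expr0 mulr1.
  by rewrite exprS exprSr -mulrA (mulrA (u ^+ k)) IH mul1r uv.
pose I k := fun x : Q => exists z, Z z /\ x = z * u ^+ k.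
have LI k : left_ideal (I k).
  split; first by exists 0; rewrite mul0r.
  split; first by move=> x y [q [Zq ->]] [q' [Zq' ->]]; exists (q + q'); rewrite mulrDl; split=> //; apply: ZD.
  split; first by move=> x [q [Zq ->]]; exists (- q); rewrite mulNr; split => //; apply: ZN.
  by move=> r x [q [Zq ->]]; exists (r * q); rewrite mulrA; split => //; apply: ZM.
have dec k x : I k.+1 x -> I k x.
  by move=> [q [Zq ->]]; exists (q * u); rewrite exprS mulrA; split => //; apply: Zu.
have [m Hm] := hA LI dec.
move=> z Zz.
have : I m (z * u ^+ m) by exists z.
move/(Hm m.+1 (leqnSn m)) => [w [Zw]]; rewrite exprS mulrA => Hw.
have -> : z = w * u.
  by rewrite -[z]mulr1 -(uvk m) mulrA Hw -mulrA uvk mulr1.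
by rewrite -mulrA uv mulr1.
Qed.

End QCore.


Section Q2.
Variable Q : pzRingType.
Hypothesis hA : left_artinian Q.
Hypothesis hS : simple_ring Q.

Lemma nz_idem (L : Q -> Prop) : left_ideal L -> (exists x, L x /\ x <> 0) ->
  exists f, L f /\ f * f = f /\ f <> 0.
Proof.
move=> LL nzL.
pose F M := left_ideal M /\ (exists x, M x /\ x <> 0) /\ subp M L.
have [M [[LM [[x0 [Mx0 x0n]] sML]] Mmin]] : exists M, F M /\ forall L', F L' -> subp L' M -> subp M L'.
  by apply: min_principle => //; [move=> ? [] | exists L; split => //; split => //].
have Mmin' M' : left_ideal M' -> (exists x, M' x /\ x <> 0) -> subp M' M -> subp M M'.
  by move=> LM' nz s; apply: Mmin => //; split => //; split => // x /s /sML.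
have [LM0 [LMD [LMN LMM]]] := LM.
have [m [Mm [m' [Mm' mm]]]] : exists m, M m /\ exists m', M m' /\ m' * m <> 0.
  apply: NNPP => H.
  pose J x := forall m, M m -> x * m = 0.
  have IJ : ideal J.
    split; split; first by move=> m _; rewrite mul0r.
    - split; first by move=> x y Jx Jy m Mm; rewrite mulrDl Jx // Jy // addr0.
      split; first by move=> x Jx m Mm; rewrite mulNr Jx // oppr0.
      by move=> r x Jx m Mm; rewrite -mulrA Jx // mulr0.
    - by move=> m _; rewrite mul0r.
    split; first by move=> x y Jx Jy m Mm; rewrite mulrDl Jx // Jy // addr0.
    split; first by move=> x Jx m Mm; rewrite mulNr Jx // oppr0.
    by move=> r x Jx m Mm; rewrite -mulrA Jx //; apply: (LMM).
  case: (proj2 hS J IJ) => [J0|J1].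
    apply: x0n; apply: J0 => m Mm; apply: NNPP => nz; apply: H.
    by exists m; split => //; exists x0; split.
  by apply: x0n; have := J1 1 x0 Mx0; rewrite mul1r.
have m0 : m <> 0 by move=> m0; apply: mm; rewrite m0 mulr0.
pose Mm_ x := exists y, M y /\ x = y * m.
have LMm : left_ideal Mm_.
  split; first by exists 0; rewrite mul0r; split.
  split; first by move=> x y [a [Ma ->]] [b [Mb ->]]; exists (a + b); rewrite mulrDl; split => //; apply: (LMD).
  split; first by move=> x [a [Ma ->]]; exists (- a); rewrite mulNr; split => //; apply: (LMN).
  by move=> r x [a [Ma ->]]; exists (r * a); rewrite mulrA; split => //; apply: (LMM).
have [e [Me em]] : Mm_ m.
  apply: (Mmin' Mm_ LMm) => //; first by exists (m' * m); split => //; exists m'.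
  by move=> x [a [Ma ->]]; apply: (LMM).
pose N x := M x /\ x * m = 0.
have LN : left_ideal N.
  split; first by split => //; rewrite mul0r.
  split; first by move=> x y [Mx hx] [My hy]; split; [apply: (LMD) | rewrite mulrDl hx hy addr0].
  split; first by move=> x [Mx hx]; split; [apply: (LMN) | rewrite mulNr hx oppr0].
  by move=> r x [Mx hx]; split; [apply: (LMM) | rewrite -mulrA hx mulr0].
have N0 x : N x -> x = 0.
  move=> Nx; apply: NNPP => xn.
  have [_ /mm //] : M m' /\ m' * m = 0 := Mmin' N LN (ex_intro _ x (conj Nx xn)) (fun y (Ny : N y) => proj1 Ny) m' Mm'.
exists e; split; first exact: sML.
split.
  apply/eqP; rewrite -subr_eq0; apply/eqP; apply: N0; split.
    by apply: (LMD); [apply: (LMM) | apply: (LMN)].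
  by rewrite mulrBl -mulrA -em -em subrr.
by move=> e0; apply: m0; rewrite em e0 mul0r.
Qed.

Lemma li_idem (L : Q -> Prop) : left_ideal L ->
  exists e, L e /\ e * e = e /\ forall x, L x <-> x = x * e.
Proof.
move=> LL; have [L0 [LD [LN LM]]] := LL.
pose F N := exists e, L e /\ e * e = e /\ forall x, N x <-> (L x /\ x * e = 0).
have FL N : F N -> left_ideal N.
  move=> [e [Le [ee HN]]]; split; first by apply/HN; rewrite mul0r.
  split; first by move=> x y /HN [Lx x0] /HN [Ly y0]; apply/HN; split; [apply: (LD) | rewrite mulrDl x0 y0 addr0].
  split; first by move=> x /HN [Lx x0]; apply/HN; split; [apply: (LN) | rewrite mulNr x0 oppr0].
  by move=> r x /HN [Lx x0]; apply/HN; split; [apply: (LM) | rewrite -mulrA x0 mulr0].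
have [N [[e [Le [ee HN]]] Nmin]] : exists N, F N /\ forall L', F L' -> subp L' N -> subp N L'.
  apply: min_principle => //; exists (fun x => L x /\ x * 0 = 0); exists 0.
  by split => //; split; [rewrite mulr0|].
have Nz x : L x -> x * e = 0 -> x = 0.
  move=> Lx xe; apply: NNPP => xn.
  have [f [Nf [ff fn]]] := nz_idem (FL N (ex_intro _ e (conj Le (conj ee HN)))) (ex_intro _ x (conj (proj2 (HN x) (conj Lx xe)) xn)).
  have [Lf fe] := proj1 (HN f) Nf.
  have [e'e [e'f [e'e' fe']]] := idem_join ee ff fe.
  set e' := e + f - e * f in e'e e'f e'e' fe'.
  have Fe' : F (fun x => L x /\ x * e' = 0).
    exists e'; split; last by split.
    by rewrite /e'; apply: (LD); [apply: (LD) => // | apply: (LN); apply: (LM)].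
  have sub' : subp (fun x => L x /\ x * e' = 0) N.
    move=> y [Ly ye2]; apply/HN; split => //.
    by rewrite -e'e mulrA ye2 mul0r.
  have [_] := Nmin _ Fe' sub' f Nf.
  by rewrite fe'.
exists e; split => //; split => // x; split => [Lx|].
apply/eqP; rewrite -subr_eq0; apply/eqP; apply: Nz.
  by apply: (LD) => //; apply: (LN); apply: (LM).
by rewrite mulrBl -mulrA ee subrr.
move=> ->; exact: LM.
Qed.

End Q2.


Section Q3.
Variable Q : pzRingType.
Hypothesis hA : left_artinian Q.
Hypothesis hS : simple_ring Q.

Lemma vnr (a : Q) : exists w, a * w * a = a.
Proof.
pose Qa x := exists q, x = q * a.
have LQa : left_ideal Qa.
  split; first by exists 0; rewrite mul0r.
  split; first by move=> x y [q ->] [q' ->]; exists (q + q'); rewrite mulrDl.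
  split; first by move=> x [q ->]; exists (- q); rewrite mulNr.
  by move=> r x [q ->]; exists (r * q); rewrite mulrA.
have [g [[w gw] [gg Hg]]] := li_idem hA hS LQa.
exists w; rewrite -mulrA -gw; apply/esym/Hg; exists 1; rewrite mul1r.
by [].
Qed.

Lemma elt_idem (b : Q) : exists g, g * g = g /\ (exists w, g = b * w) /\ b = g * b.
Proof.
have [w bw] := vnr b; exists (b * w); split; last by split; [exists w|].
by rewrite mulrA bw.
Qed.

Lemma ri_principal (K : Q -> Prop) : right_ideal K ->
  exists h, K h /\ h * h = h /\ forall x, K x <-> x = h * x.
Proof.
move=> [K0 [KD [KN KM]]].
pose F L := exists h, K h /\ h * h = h /\ forall x, L x <-> x * h = 0.
have FL L : F L -> left_ideal L.
  move=> [h [_ [_ HL]]]; split; first by apply/HL; rewrite mul0r.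
  split; first by move=> x y /HL x0 /HL y0; apply/HL; rewrite mulrDl x0 y0 addr0.
  split; first by move=> x /HL x0; apply/HL; rewrite mulNr x0 oppr0.
  by move=> r x /HL x0; apply/HL; rewrite -mulrA x0 mulr0.
have [L [[h0 [Kh0 [hh HL]]] Lmin]] : exists L, F L /\ forall L', F L' -> subp L' L -> subp L L'.
  apply: min_principle => //; exists (fun x => x * 0 = 0); exists 0; split => //; split; first by rewrite mul0r.
  by [].
have key k : K k -> k = h0 * k.
  move=> Kk; pose b := k - h0 * k.
  have Kb : K b by apply: (KD) => //; apply: (KN); apply: (KM).
  have h0b : h0 * b = 0 by rewrite /b mulrBr mulrA hh subrr.
  have [g [gg [[w gw] bg]]] := elt_idem b.
  have Kg : K g by rewrite gw; apply: (KM).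
  have h0g : h0 * g = 0 by rewrite gw mulrA h0b mul0r.
  have [h'g [h'h0 [h'h' _]]] := idem_join gg hh h0g.
  set h' := g + h0 - g * h0 in h'g h'h0 h'h'.
  have Fh' : F (fun x => x * h' = 0).
    exists h'; split => //; rewrite /h'; apply: (KD); [apply: (KD) => // | apply: (KN); apply: (KM) => //].
  have sub' : subp (fun x => x * h' = 0) L by move=> x xh; apply/HL; rewrite -h'h0 mulrA xh mul0r.
  have L1 : L (1 - h0) by apply/HL; rewrite mulrBl mul1r hh subrr.
  have e1 : (1 - h0) * h' = 0 := Lmin _ Fh' sub' _ L1.
  have e2 : h' = h0 * h' by apply/eqP; rewrite -subr_eq0 -{1}[h']mul1r -mulrBl e1.
  have b1 : b = h0 * h' * g * b by rewrite -e2 h'g -bg.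
  have e3 : b = h0 * b by rewrite {2}b1 !mulrA hh -b1.
  by apply/eqP; rewrite -subr_eq0 -/b e3 h0b.
exists h0; split => //; split => // x; split; first exact: key.
by move=> ->; apply: (KM).
Qed.

Lemma ri_ann (K : Q -> Prop) : right_ideal K ->
  forall x, K x <-> (forall y, (forall z, K z -> y * z = 0) -> y * x = 0).
Proof.
move=> RK; have [h [Kh [hh HK]]] := ri_principal RK.
move=> x; split; first by move=> Kx y Hy; apply: Hy.
move=> H; apply/HK/eqP; rewrite -subr_eq0 -{1}[x]mul1r -mulrBl; apply/eqP; apply: H.
by move=> z /HK ->; rewrite mulrA mulrBl mul1r hh subrr mul0r.
Qed.

End Q3.


Section Q4.
Variable Q : pzRingType.
Hypothesis hA : left_artinian Q.
Hypothesis hS : simple_ring Q.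

Definition rep (L : Q -> Prop) (e : Q) := e * e = e /\ forall x, L x <-> x = x * e.

Lemma acc_step (L L' : Q -> Prop) (e : Q) : left_ideal L' -> subp L L' -> L e -> rep L e ->
  exists e', L' e' /\ rep L' e' /\ e' * e = e /\
    ((forall x, x * e = 0 -> x * e' = 0) -> subp L' L).
Proof.
move=> LL' sLL' Le [ee HL]; have [L0 [LD [LN LM]]] := LL'.
pose N x := L' x /\ x * e = 0.
have LN' : left_ideal N.
  split; first by split => //; rewrite mul0r.
  split; first by move=> x y [Lx hx] [Ly hy]; split; [apply: (LD) | rewrite mulrDl hx hy addr0].
  split; first by move=> x [Lx hx]; split; [apply: (LN) | rewrite mulNr hx oppr0].
  by move=> r x [Lx hx]; split; [apply: (LM) | rewrite -mulrA hx mulr0].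
have [h [[L'h he] [hh HN]]] := li_idem hA hS LN'.
have [e'e [e'h [e'e' he']]] := idem_join ee hh he.
set e' := e + h - e * h in e'e e'h e'e' he'.
have Le' : L' e' by rewrite /e'; apply: (LD); [apply: (LD) => //; exact: sLL' | apply: (LN); apply: (LM)].
exists e'; split => //; split.
  split => // x; split => [Lx|->]; last exact: (LM).
  have Nx : N (x - x * e).
    split; first by apply: (LD) => //; apply: (LN); apply: (LM); exact: sLL'.
    by rewrite mulrBl -mulrA ee subrr.
  have := proj1 (HN _) Nx.
  rewrite /e' mulrBl !mulrDr mulrN mulrA => H.
  by rewrite -addrA -H addrC subrK.
split => // H x L'x.
have h0 : h = 0 by rewrite -he' H // mul0r.
have Nx : N (x - x * e).
  split; first by apply: (LD) => //; apply: (LN); apply: (LM); exact: sLL'.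
  by rewrite mulrBl -mulrA ee subrr.
have := proj1 (HN _) Nx; rewrite h0 mulr0 => /eqP; rewrite subr_eq0 => /eqP ->.
by apply/HL; rewrite -mulrA ee.
Qed.

Lemma acc_left (L : nat -> Q -> Prop) : (forall k, left_ideal (L k)) ->
  (forall k x, L k x -> L k.+1 x) -> exists m, forall k, (m <= k)%N -> forall x, L k x <-> L m x.
Proof.
move=> LL inc.
have H2 : forall k e, exists e', (L k e /\ rep (L k) e) ->
   (L k.+1 e' /\ rep (L k.+1) e' /\ e' * e = e /\
    ((forall x, x * e = 0 -> x * e' = 0) -> subp (L k.+1) (L k))).
  move=> k e; case: (classic (L k e /\ rep (L k) e)) => [[Le Hr]|nH].
    by have [e' He'] := acc_step (LL k.+1) (inc k) Le Hr; exists e' => _.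
  by exists e => /nH.
pose nxt k e := proj1_sig (constructive_indefinite_description _ (H2 k e)).
have nxtP k e : L k e /\ rep (L k) e -> (L k.+1 (nxt k e) /\ rep (L k.+1) (nxt k e) /\ nxt k e * e = e /\
    ((forall x, x * e = 0 -> x * nxt k e = 0) -> subp (L k.+1) (L k))).
  exact: (proj2_sig (constructive_indefinite_description _ (H2 k e))).
have [e0 [Le0 Hr0]] := li_idem hA hS (LL 0%N).
pose E := fix E k := if k is k'.+1 then nxt k' (E k') else e0.
have EP k : L k (E k) /\ rep (L k) (E k).
  elim: k => [|k IH]; first by split => //; split.
  by have [? [? _]] := nxtP k _ IH; split.
pose C k := fun x : Q => x * E k = 0.
have LC k : left_ideal (C k).
  split; first by rewrite /C mul0r.
  split; first by move=> x y hx hy; rewrite /C mulrDl hx hy addr0.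
  split; first by move=> x hx; rewrite /C mulNr hx oppr0.
  by move=> r x hx; rewrite /C -mulrA hx mulr0.
have dec k x : C k.+1 x -> C k x.
  have [_ [_ [EE _]]] := nxtP k _ (EP k).
  by rewrite /C => hx; rewrite -EE mulrA [_ * nxt _ _]hx mul0r.
have [m Hm] := hA LC dec.
have step k : (m <= k)%N -> subp (L k.+1) (L k).
  move=> mk; have [_ [_ [_ H]]] := nxtP k _ (EP k); apply: H => x hx.
  have : C k x by exact hx.
  by move/(Hm k mk)/(Hm k.+1 (leqW mk)).
exists m => k mk; elim: k mk => [|k IH] mk x.
  by have -> : m = 0%N by apply/eqP; rewrite -leqn0.
case: (leqP m k) => [mk'|km].
  rewrite -(IH mk'); split; [exact: step | exact: inc].
by have -> : m = k.+1 by apply/eqP; rewrite eqn_leq mk km.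
Qed.

End Q4.


Lemma conv_sa (Q : pzRingType) : simple_artinian Q -> simple_artinian (GRing.converse Q).
Proof.
move=> [hS hA]; split.
  split; first exact: (proj1 hS).
  by move=> I [h1 h2]; apply: (proj2 hS I (conj h2 h1)).
move=> I RI dec.
pose A k := fun y : Q => forall z, I k z -> y * z = 0.
have LA k : left_ideal (A k).
  split; first by move=> z _; rewrite mul0r.
  split; first by move=> x y hx hy z Iz; rewrite mulrDl hx // hy // addr0.
  split; first by move=> x hx z Iz; rewrite mulNr hx // oppr0.
  by move=> r x hx z Iz; rewrite -mulrA hx // mulr0.
have inc k x : A k x -> A k.+1 x by move=> hx z /dec; apply: hx.
have [m Hm] := acc_left hA hS LA inc.
exists m => k mk x.
have cv j : right_ideal (I j : Q -> Prop).
  by have [a [b [c d]]] := RI j; split => //; split => //; split => //.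
have RIk := cv k; have RIm := cv m.
rewrite (ri_ann hA hS RIk) (ri_ann hA hS RIm).
by split => H y hy; apply: H; apply/(Hm k mk).
Qed.

Lemma q_udim (Q : pzRingType) : simple_artinian Q -> left_finite_udim Q.
Proof.
move=> [hS hA] [I [LI [nz ind]]].
pose T m := fun x : Q => exists y : nat -> Q, (forall k, (k < m)%N -> I k (y k)) /\ x = \sum_(k < m) y k.
have LT m : left_ideal (T m).
  split; first by exists (fun _ => 0); split; [move=> k _; exact: (proj1 (LI k)) | rewrite big1].
  split.
    move=> x x' [y [Iy ->]] [y' [Iy' ->]]; exists (fun k => y k + y' k); split; last by rewrite big_split.
    by move=> k km; apply: (proj1 (proj2 (LI k))); [apply: Iy | apply: Iy'].
  split.
    move=> x [y [Iy ->]]; exists (fun k => - y k); split; last by rewrite sumrN.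
    by move=> k km; apply: (proj1 (proj2 (proj2 (LI k)))); apply: Iy.
  move=> r x [y [Iy ->]]; exists (fun k => r * y k); split; last by rewrite mulr_sumr.
  by move=> k km; apply: (proj2 (proj2 (proj2 (LI k)))); apply: Iy.
have inc m x : T m x -> T m.+1 x.
  move=> [y [Iy ->]]; exists (fun k => if (k < m)%N then y k else 0); split.
    move=> k _; case: ifP => [/Iy //|_]; exact: (proj1 (LI k)).
  rewrite big_ord_recr /= ltnn addr0; apply: eq_bigr => i _ /=; by rewrite ltn_ord.
have [M HM] := acc_left hA hS LT inc.
have [x [IMx xn]] := nz M.
have : T M.+1 x.
  exists (fun k => if k == M then x else 0); split.
    move=> k _; case: eqP => [-> //|_]; exact: (proj1 (LI k)).
  rewrite big_ord_recr /= eqxx big1 ?add0r // => i _; by rewrite (ltn_eqF (ltn_ord i)).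
move/(HM M.+1 (leqnSn M)) => [y [Iy xy]].
pose z k := if (k < M)%N then y k else - x.
have := ind M.+1 z.
have Hz : forall k, (k < M.+1)%N -> I k (z k).
  move=> k; rewrite ltnS leq_eqVlt => /orP [/eqP ->|kM]; rewrite /z.
    by rewrite ltnn; apply: (proj1 (proj2 (proj2 (LI M)))).
  by rewrite kM; apply: Iy.
move=> /(_ Hz); rewrite big_ord_recr /= /z ltnn.
have -> : \sum_(i < M) (if (widen_ord (leqnSn M) i < M)%N then y (widen_ord (leqnSn M) i) else - x) = x.
  by rewrite xy; apply: eq_bigr => i _ /=; rewrite ltn_ord.
rewrite subrr => /(_ erefl M (ltnSn M)); rewrite ltnn => /eqP; rewrite oppr_eq0 => /eqP H.
exact: xn H.
Qed.


Definition conv_fun (R Q : pzRingType) (f : R -> Q) : GRing.converse R -> GRing.converse Q := f.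

Section ConvM.
Variables (R Q : pzRingType) (f : {rmorphism R -> Q}).
Lemma conv_fun_is_nmod : nmod_morphism (conv_fun f).
Proof. by split; [apply: (rmorph0 f) | move=> x y; apply: (rmorphD f)]. Qed.
Lemma conv_fun_is_monoid : monoid_morphism (conv_fun f).
Proof. by split; [apply: (rmorph1 f) | move=> x y; apply: (rmorphM f y x)]. Qed.
HB.instance Definition _ := GRing.isNmodMorphism.Build _ _ (conv_fun f) conv_fun_is_nmod.
HB.instance Definition _ := GRing.isMonoidMorphism.Build _ _ (conv_fun f) conv_fun_is_monoid.
End ConvM.



Lemma choice_fun (A B : Type) (P : A -> B -> Prop) : (forall a, exists b, P a b) -> exists g, forall a, P a (g a).
Proof.
move=> H; exists (fun a => proj1_sig (constructive_indefinite_description _ (H a))).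
by move=> a; exact: (proj2_sig (constructive_indefinite_description _ (H a))).
Qed.

Lemma rmorph_inj0 (T Q : pzRingType) (f : {rmorphism T -> Q}) : injective f -> forall x, f x = 0 -> x = 0.
Proof. by move=> inj x fx; apply: inj; rewrite fx rmorph0. Qed.

Section AccOrder.
Variables (T Q : pzRingType) (f : {rmorphism T -> Q}).
Hypothesis finj : injective f.
Hypothesis hSA : simple_artinian Q.

Lemma acc_order : acc_lann T.
Proof.
move=> X inc.
pose Y k := rann (lann (X k)).
pose A k := fun q : Q => forall y, Y k y -> q * f y = 0.
have LA k : left_ideal (A k).
  split; first by move=> y _; rewrite mul0r.
  split; first by move=> x y hx hy z Iz; rewrite mulrDl hx // hy // addr0.
  split; first by move=> x hx z Iz; rewrite mulNr hx // oppr0.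
  by move=> r x hx z Iz; rewrite -mulrA hx // mulr0.
have incA k q : A k q -> A k.+1 q.
  move=> hq y Yy; apply: hq => x Lx; apply: Yy; exact: inc.
have [m Hm] := acc_left (proj2 hSA) (proj1 hSA) LA incA.
have key j x : lann (X j) x <-> A j (f x).
  split.
    by move=> Lx y Yy; rewrite -rmorphM (Yy x Lx) rmorph0.
  move=> Ax z Xz; apply: (rmorph_inj0 finj); rewrite rmorphM; apply: Ax.
  by move=> x' Lx'; apply: Lx'.
exists m => k mk x; rewrite !key; exact: Hm.
Qed.
End AccOrder.

Section Order.
Variables (R Q : pzRingType) (f : {rmorphism R -> Q}) (S : R -> Prop).
Hypothesis hSA : simple_artinian Q.
Hypothesis hmS : mult_set S.
Hypothesis hinv : forall s, S s -> invertible (f s).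
Hypothesis hfr : forall q, left_frac S f q.

Lemma inv_l (c : R) : (forall a, f (a * c) = 0 -> f a = 0) -> invertible (f c).
Proof.
move=> Hc; apply: (left_reg_inv (proj2 hSA)) => x xc.
have [s [r [y [Ss [sy [ys E]]]]]] := hfr x.
rewrite E in xc *.
have : f r = 0.
  apply: Hc; rewrite rmorphM -[f r]mul1r -sy.
  by rewrite -!mulrA (mulrA y) xc mulr0.
by move=> ->; rewrite mulr0.
Qed.

Lemma ore (s r : R) : S s -> exists t u, S t /\ f t * f r = f u * f s.
Proof.
move=> Ss; have [y [sy ys]] := hinv Ss.
have [t [u [z [St [tz [zt E]]]]]] := hfr (f r * y).
exists t, u; split => //.
by rewrite -[f r]mulr1 -ys !mulrA -(mulrA (f t) (f r) y) E !mulrA tz mul1r.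
Qed.

Lemma common (m : nat) (s : nat -> R) : (forall k, (k < m)%N -> S (s k)) ->
  exists t, S t /\ forall k, (k < m)%N -> exists u, f t = f u * f (s k).
Proof.
elim: m => [|m IH] Hs.
  by exists 1; split; [exact: (proj1 hmS) | move=> k].
have [t [St Ht]] := IH (fun k km => Hs k (ltnW km)).
have [t' [u [St' E]]] := ore t (Hs m (ltnSn m)).
exists (t' * t); split; first exact: (proj2 (proj2 hmS)).
move=> k; rewrite ltnS leq_eqVlt => /orP [/eqP ->|km].
  by exists u; rewrite rmorphM E.
have [u' E'] := Ht k km; exists (t' * u').
by rewrite !rmorphM E' mulrA.
Qed.

Definition fracI (I : R -> Prop) := fun x : Q => exists s a, S s /\ I a /\ f s * x = f a.

Lemma fracI_left (I : R -> Prop) : left_ideal I -> left_ideal (fracI I).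
Proof.
move=> [I0 [ID [IN IM]]].
split; first by exists 1, 0; split; [exact: (proj1 hmS)|split => //]; rewrite mulr0 rmorph0.
split.
  move=> x1 x2 [s1 [a1 [S1 [I1 E1]]]] [s2 [a2 [S2 [I2 E2]]]].
  have [t [u [St E]]] := ore s2 S1.
  exists (t * s2), (u * a1 + t * a2); split; first exact: (proj2 (proj2 hmS)).
  split; first by apply: (ID); apply: (IM).
  by rewrite rmorphD !rmorphM mulrDr {1}E -!mulrA E1 E2.
split.
  move=> x [s [a [Ss [Ia E]]]]; exists s, (- a); split => //; split; first exact: (IN).
  by rewrite mulrN E rmorphN.
move=> p x [s [a [Ss [Ia E]]]].
have [s' [r' [y [Ss' [sy [ys ->]]]]]] := hfr p.
have [t [u [St E2]]] := ore r' Ss.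
exists (t * s'), (u * a); split; first exact: (proj2 (proj2 hmS)).
split; first exact: (IM).
by rewrite !rmorphM -!mulrA (mulrA (f s')) sy mul1r mulrA E2 -mulrA E.
Qed.

Lemma ideal_unit (I : R -> Prop) : ideal I -> (exists a, I a /\ f a <> 0) ->
  exists c, I c /\ invertible (f c).
Proof.
move=> [LI RI] [a0 [Ia0 fa0]].
have LZ := fracI_left LI.
have [_ [_ [_ IR]]] := RI.
have Zr z r : fracI I z -> fracI I (z * f r).
  move=> [s [a [Ss [Ia E]]]]; exists s, (a * r); split => //; split; first exact: IR.
  by rewrite mulrA E rmorphM.
have RZ : right_ideal (fracI I).
  have [Z0 [ZD [ZN _]]] := LZ.
  split => //; split => //; split => // p z Zz.
  have [s [r [y [Ss [sy [ys ->]]]]]] := hfr p.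
  rewrite mulrA; apply: (Zr).
  by apply: (li_rmul_inv (proj2 hSA) LZ sy ys) => // w Zw; apply: (Zr).
case: (proj2 (proj1 hSA) _ (conj LZ RZ)) => [Z0|Z1].
  by exfalso; apply: fa0; apply: Z0; exists 1, a0; split; [exact: (proj1 hmS)|split => //]; rewrite rmorph1 mul1r.
have [s [a [Ss [Ia E]]]] := Z1 1.
by exists a; split => //; rewrite -E mulr1; exact: hinv.
Qed.

Lemma udim_order : injective f -> left_finite_udim R.
Proof.
move=> finj [I [LI [nz ind]]].
apply: (q_udim hSA); exists (fun k => fracI (I k)); split; first by move=> k; exact: fracI_left.
split.
  move=> k; have [a [Ia an]] := nz k; exists (f a); split.
    by exists 1, a; split; [exact: (proj1 hmS)|split => //]; rewrite rmorph1 mul1r.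
  by move/(rmorph_inj0 finj).
move=> m x Hx sx.
have H1 : forall k, exists p : R * R, (k < m)%N -> S p.1 /\ I k p.2 /\ f p.1 * x k = f p.2.
  move=> k; case: (ltnP k m) => [km|mk]; last by exists (0, 0).
  by have [s [a H]] := Hx k km; exists (s, a).
have [g Hg] := choice_fun H1.
have [t [St Ht]] := common (s := fun k => (g k).1) (fun k km => proj1 (Hg k km)).
have H2 : forall k, exists u : R, (k < m)%N -> f t = f u * f (g k).1.
  move=> k; case: (ltnP k m) => [km|mk]; last by exists 0.
  by have [u E] := Ht k km; exists u.
have [u Hu] := choice_fun H2.
have Hb k : (k < m)%N -> f (u k * (g k).2) = f t * x k.
  by move=> km; rewrite rmorphM (Hu k km) -mulrA (proj2 (proj2 (Hg k km))).
have sb : \sum_(k < m) u k * (g k).2 = 0.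
  apply: (rmorph_inj0 finj); rewrite rmorph_sum.
  rewrite (eq_bigr (fun k : 'I_m => f t * x k)); last by move=> k _; apply: Hb.
  by rewrite -mulr_sumr sx mulr0.
have Ib k : (k < m)%N -> I k (u k * (g k).2).
  by move=> km; apply: (proj2 (proj2 (proj2 (LI k)))); exact: (proj1 (proj2 (Hg k km))).
move=> k km; have := ind m _ Ib sb k km.
have [y [ty yt]] := hinv St.
move=> /(congr1 f); rewrite Hb // rmorph0 => /(congr1 (fun z => y * z)).
by rewrite mulr0 mulrA yt mul1r.
Qed.

End Order.

Section Prime.
Variables (R Q : pzRingType) (f : {rmorphism R -> Q}) (S : R -> Prop).
Hypothesis hSA : simple_artinian Q.
Hypothesis hgen : forall q, exists s r y, S s /\ f s * y = 1 /\ y * f s = 1 /\ (q = y * f r \/ q = f r * y).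

Lemma prime_ker : prime_ideal (fun r => f r = 0).
Proof.
split.
  split; (split; first by rewrite rmorph0); (split; first by move=> x y hx hy; rewrite rmorphD hx hy addr0);
    (split; first by move=> x hx; rewrite rmorphN hx oppr0); by move=> r x hx; rewrite rmorphM hx ?mulr0 ?mul0r.
split; first by exists 1; rewrite rmorph1; exact: (proj1 (proj1 hSA)).
move=> A B [LA RA] [LB RB] AB.
case: (classic (forall a, A a -> f a = 0)) => [H|]; first by left.
move=> /not_all_ex_not [a0 H0]; right => b Bb.
have Aa0 := not_imply_elim _ _ H0; have fa0 := not_imply_elim2 _ _ H0.
pose Z := fun z : Q => forall r, z * f (r * b) = 0.
have LZ : left_ideal Z.
  split; first by move=> r; rewrite mul0r.
  split; first by move=> x y hx hy r; rewrite mulrDl hx hy addr0.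
  split; first by move=> x hx r; rewrite mulNr hx oppr0.
  by move=> r x hx r'; rewrite -mulrA hx mulr0.
have Zr z r : Z z -> Z (z * f r).
  by move=> hz r'; rewrite -mulrA -rmorphM mulrA hz.
have RZ : right_ideal Z.
  have [Z0 [ZD [ZN _]]] := LZ.
  split => //; split => //; split => // p z Zz.
  have [s [r [y [Ss [sy [ys [->| ->]]]]]]] := hgen p.
    rewrite mulrA; apply: (Zr).
    by apply: (li_rmul_inv (proj2 hSA) LZ sy ys) => // w Zw; apply: (Zr).
  rewrite mulrA; apply: (li_rmul_inv (proj2 hSA) LZ sy ys) => //; last exact: (Zr).
  by move=> w Zw; apply: (Zr).
case: (proj2 (proj1 hSA) _ (conj LZ RZ)) => [Z0|Z1].
  exfalso; apply: fa0; apply: Z0 => r; rewrite -rmorphM; apply: AB => //.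
  by apply: (proj2 (proj2 (proj2 LB))).
by have := Z1 1 1; rewrite mul1r mul1r.
Qed.
End Prime.


Lemma inv_conv (Q : pzRingType) (x : Q) : @invertible (GRing.converse Q) x -> invertible x.
Proof. by move=> [y [h1 h2]]; exists y. Qed.

Lemma conv_pkg (R Q : pzRingType) (phi : {rmorphism R -> Q}) (S : R -> Prop) :
  mult_set S -> (forall s, S s -> invertible (phi s)) -> (forall q, right_frac S phi q) ->
  [/\ @mult_set (GRing.converse R) S, (forall s, S s -> invertible (conv_fun phi s)) &
      (forall q, left_frac S (conv_fun phi) q)].
Proof.
move=> [h1 [h0 hM]] hinv hfr; split.
- by split => //; split => // s t Ss St; exact: (hM t s).
- by move=> s /hinv [y [a b]]; exists y.
- by move=> q; have [s [r [y [Ss [a [b c]]]]]] := hfr q; exists s, r, y.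
Qed.

Section Single.
Variables (R Q : pzRingType) (phi : {rmorphism R -> Q}) (S : R -> Prop) (sd : side).
Hypotheses (hmS : mult_set S) (hinv : forall s, S s -> invertible (phi s))
  (hL : localizable sd S phi) (hsa : simple_artinian Q).

Lemma s_lfrac : sd <> sideR -> forall q, left_frac S phi q.
Proof.
move: hL => [_]; case: sd => H nR q; [exact: (H q) | by [] | exact: (proj1 (H q))].
Qed.
Lemma s_rfrac : sd <> sideL -> forall q, right_frac S phi q.
Proof.
move: hL => [_]; case: sd => H nR q; [by [] | exact: (H q) | exact: (proj2 (H q))].
Qed.

Lemma s_hgen q : exists s r y, S s /\ phi s * y = 1 /\ y * phi s = 1 /\ (q = y * phi r \/ q = phi r * y).
Proof.
case E : sd.
- have [s [r [y [? [? [? ?]]]]]] := s_lfrac ltac:(by rewrite E) q; exists s, r, y; do !split => //; by left.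
- have [s [r [y [? [? [? ?]]]]]] := s_rfrac ltac:(by rewrite E) q; exists s, r, y; do !split => //; by right.
- have [s [r [y [? [? [? ?]]]]]] := s_lfrac ltac:(by rewrite E) q; exists s, r, y; do !split => //; by left.
Qed.

Lemma s_prime : prime_ideal (fun r => phi r = 0).
Proof. exact: (prime_ker hsa s_hgen). Qed.

Lemma s_inv (c : R) : (forall a, phi (a * c) = 0 -> phi a = 0) -> (forall a, phi (c * a) = 0 -> phi a = 0) ->
  invertible (phi c).
Proof.
move=> H1 H2; case E : sd.
- exact: (inv_l hsa (s_lfrac ltac:(by rewrite E)) H1).
- have [m1 m2 m3] := conv_pkg hmS hinv (s_rfrac ltac:(by rewrite E)).
  have h := @inv_l (GRing.converse R) (GRing.converse Q) (conv_fun phi) S (conv_sa hsa) m3 c (fun a => H2 a).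
  by move: h => [y [h1 h2]]; exists y.
- exact: (inv_l hsa (s_lfrac ltac:(by rewrite E)) H1).
Qed.

Lemma s_ideal_unit (I : R -> Prop) : ideal I -> (exists a, I a /\ phi a <> 0) ->
  exists c, I c /\ invertible (phi c).
Proof.
move=> [LI RI] nz; case E : sd.
- exact: (ideal_unit hsa hmS hinv (s_lfrac ltac:(by rewrite E)) (conj LI RI) nz).
- have [m1 m2 m3] := conv_pkg hmS hinv (s_rfrac ltac:(by rewrite E)).
  have [c [Ic hc]] := ideal_unit (conv_sa hsa) m1 m2 m3 (I := I) (conj RI LI) nz.
  by exists c; split => //; move: hc => [y [h1 h2]]; exists y.
- exact: (ideal_unit hsa hmS hinv (s_lfrac ltac:(by rewrite E)) (conj LI RI) nz).
Qed.

End Single.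


Lemma conv_frac (R Q : pzRingType) (phi : {rmorphism R -> Q}) (S : R -> Prop) :
  (forall q, right_frac S phi q) -> forall q, left_frac S (conv_fun phi) q.
Proof. by move=> hfr q; have [s [r [y [Ss [a [b c]]]]]] := hfr q; exists s, r, y. Qed.

Lemma conv_mult (R : pzRingType) (S : R -> Prop) : mult_set S -> @mult_set (GRing.converse R) S.
Proof. by move=> [h1 [h0 hM]]; split => //; split => // s t Ss St; exact: (hM t s). Qed.

Lemma conv_hinv (R Q : pzRingType) (phi : {rmorphism R -> Q}) (S : R -> Prop) :
  (forall s, S s -> invertible (phi s)) -> forall s, S s -> invertible (conv_fun phi s).
Proof. by move=> hinv s /hinv [y [a b]]; exists y. Qed.

Lemma reg_mult (T : pzRingType) : (1 : T) <> 0 -> mult_set (@regular T).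
Proof.
move=> h10; split; first by move=> a; rewrite mulr1 mul1r.
split; first by move=> h; apply: h10; apply: (proj1 (h 1)); rewrite mulr0.
move=> c d hc hd a; split.
  by rewrite mulrA => /(proj1 (hd _)) /(proj1 (hc _)).
by rewrite -mulrA => /(proj2 (hc _)) /(proj2 (hd _)).
Qed.

Section Part1.
Variables (R Q : pzRingType) (phi : {rmorphism R -> Q}) (S : R -> Prop) (sd : side).
Hypotheses (hmS : mult_set S) (hinv : forall s, S s -> invertible (phi s))
  (hL : localizable sd S phi) (hsa : simple_artinian Q).
Variables (Ri : pzRingType) (pi : {rmorphism R -> Ri}).
Hypotheses (hsurj : forall y : Ri, exists r, pi r = y) (hker : forall r, pi r = 0 <-> phi r = 0).

Lemma s_part1 : (semiprime Ri /\ goldie Ri sd) /\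
  exists psi : {rmorphism Ri -> Q}, (forall r, psi (pi r) = phi r) /\ classical_quotient sd psi.
Proof.
have [sec hsec] := choice_fun hsurj.
have secE r1 r2 : pi r1 = pi r2 -> phi r1 = phi r2.
  move=> e; apply/eqP; rewrite -subr_eq0 -rmorphB; apply/eqP/hker.
  by rewrite rmorphB e subrr.
have hn : GRing.nmod_morphism (fun y => phi (sec y)).
  split; first by rewrite -(rmorph0 phi); apply: secE; rewrite hsec rmorph0.
  by move=> x y; rewrite -rmorphD; apply: secE; rewrite rmorphD !hsec.
have hm : GRing.monoid_morphism (fun y => phi (sec y)).
  split; first by rewrite -(rmorph1 phi); apply: secE; rewrite hsec rmorph1.
  by move=> x y; rewrite -rmorphM; apply: secE; rewrite rmorphM !hsec.
pose psi : {rmorphism Ri -> Q} :=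
  HB.pack (fun y => phi (sec y)) (GRing.isNmodMorphism.Build _ _ _ hn) (GRing.isMonoidMorphism.Build _ _ _ hm).
have psiE r : psi (pi r) = phi r by apply: secE; rewrite hsec.
have psi_inj : injective psi.
  move=> x y e; rewrite -(hsec x) -(hsec y); apply/eqP; rewrite -subr_eq0 -rmorphB; apply/eqP/hker.
  by rewrite rmorphB; apply/eqP; rewrite subr_eq0; apply/eqP.
have h10 : (1 : Ri) <> 0.
  move=> e; apply: (proj1 (proj1 hsa)); rewrite -(rmorph1 phi); apply/hker; by rewrite rmorph1.
have regS s : S s -> regular (pi s).
  move=> Ss; have [y [sy ys]] := hinv Ss.
  move=> a; split => e; apply: psi_inj; rewrite rmorph0.
    by rewrite -[psi a]mulr1 -sy mulrA -psiE -rmorphM e rmorph0 mul0r.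
  by rewrite -[psi a]mul1r -ys -mulrA -psiE -rmorphM e rmorph0 mulr0.
have fL : sd <> sideR -> forall q, left_frac (@regular Ri) psi q.
  move=> nR q; have [s [r [y [Ss [a [b ->]]]]]] := s_lfrac hL nR q.
  by exists (pi s), (pi r), y; rewrite !psiE; split; [apply: regS | do !split].
have fR : sd <> sideL -> forall q, right_frac (@regular Ri) psi q.
  move=> nL q; have [s [r [y [Ss [a [b ->]]]]]] := s_rfrac hL nL q.
  by exists (pi s), (pi r), y; rewrite !psiE; split; [apply: regS | do !split].
have inj0 := rmorph_inj0 psi_inj.
have rinv c : regular c -> invertible (psi c).
  move=> rc; case E : sd.
  - by apply: (inv_l hsa (fL ltac:(by rewrite E))) => a /inj0 /(proj1 (rc a)) ->; rewrite rmorph0.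
  - have h := @inv_l (GRing.converse Ri) (GRing.converse Q) (conv_fun psi) (@regular Ri) (conv_sa hsa)
       (conv_frac (fR ltac:(by rewrite E))) c.
    have : invertible (conv_fun psi c).
      by apply: h => a /inj0 /(proj2 (rc a)) ->; rewrite /conv_fun rmorph0.
    by move=> [y [h1 h2]]; exists y.
  - by apply: (inv_l hsa (fL ltac:(by rewrite E))) => a /inj0 /(proj1 (rc a)) ->; rewrite rmorph0.
have accL : acc_lann Ri := acc_order psi_inj hsa.
have accR : acc_rann Ri := @acc_order (GRing.converse Ri) (GRing.converse Q) (conv_fun psi) psi_inj (conv_sa hsa).
have udL : sd <> sideR -> left_finite_udim Ri.
  by move=> nR; exact: (udim_order hsa (reg_mult h10) rinv (fL nR) psi_inj).
have udR : sd <> sideL -> right_finite_udim Ri.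
  move=> nL.
  exact: (@udim_order (GRing.converse Ri) (GRing.converse Q) (conv_fun psi) (@regular Ri) (conv_sa hsa)
     (conv_mult (reg_mult h10)) (conv_hinv rinv) (conv_frac (fR nL)) psi_inj).
split; first split.
- move=> A [[A0 [AD [AN AM]]] [_ [_ [_ AR]]]] AA a Aa.
  have [_ [_ Hp]] := s_prime hL hsa.
  have IA : ideal (fun r => A (pi r)).
    split; split; rewrite ?rmorph0 //; (split; first by move=> x y hx hy; rewrite rmorphD; apply: AD);
      (split; first by move=> x hx; rewrite rmorphN; apply: AN); move=> r x hx; rewrite rmorphM; [exact: AM|exact: AR].
  have Hxy : forall x y, A (pi x) -> A (pi y) -> phi (x * y) = 0.
    by move=> x y hx hy; apply/hker; rewrite rmorphM; exact: AA.
  have := Hp _ _ IA IA Hxy.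
  have e : A (pi (sec a)) by rewrite hsec.
  by case=> /(_ _ e) /hker; rewrite hsec.
- by case E : sd => /=; [split; [|apply: udL; rewrite E] | split; [|apply: udR; rewrite E] | split; split; [| apply: udL; rewrite E| |apply: udR; rewrite E]].
exists psi; split => //; split => //; split => //.
by case E : sd => q /=; [apply: fL; rewrite E | apply: fR; rewrite E | split; [apply: fL | apply: fR]; rewrite E].
Qed.

End Part1.


Section P.
Variables (n : nat) (Q : 'I_n -> pzRingType).
Definition prodR := {dffun forall i, Q i}.
HB.instance Definition _ := Choice.on prodR.
Definition pz : prodR := [ffun i => 0].
Definition popp (x : prodR) : prodR := [ffun i => - x i].
Definition padd (x y : prodR) : prodR := [ffun i => x i + y i].
Definition pone : prodR := [ffun i => 1].
Definition pmul (x y : prodR) : prodR := [ffun i => x i * y i].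
Lemma paddA : associative padd. Proof. by move=> x y z; apply/ffunP => i; rewrite !ffunE addrA. Qed.
Lemma paddC : commutative padd. Proof. by move=> x y; apply/ffunP => i; rewrite !ffunE addrC. Qed.
Lemma padd0 : left_id pz padd. Proof. by move=> x; apply/ffunP => i; rewrite !ffunE add0r. Qed.
Lemma paddN : left_inverse pz popp padd. Proof. by move=> x; apply/ffunP => i; rewrite !ffunE addNr. Qed.
Lemma pmulA : associative pmul. Proof. by move=> x y z; apply/ffunP => i; rewrite !ffunE mulrA. Qed.
Lemma pmul1 : left_id pone pmul. Proof. by move=> x; apply/ffunP => i; rewrite !ffunE mul1r. Qed.
Lemma pmulr1 : right_id pone pmul. Proof. by move=> x; apply/ffunP => i; rewrite !ffunE mulr1. Qed.
Lemma pmulDl : left_distributive pmul padd. Proof. by move=> x y z; apply/ffunP => i; rewrite !ffunE mulrDl. Qed.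
Lemma pmulDr : right_distributive pmul padd. Proof. by move=> x y z; apply/ffunP => i; rewrite !ffunE mulrDr. Qed.
HB.instance Definition _ := GRing.isPzRing.Build prodR paddA paddC padd0 paddN pmulA pmul1 pmulr1 pmulDl pmulDr.
Lemma prod_mulE (x y : prodR) i : (x * y) i = x i * y i. Proof. by rewrite /GRing.mul /= ffunE. Qed.
Lemma prod_addE (x y : prodR) i : (x + y) i = x i + y i. Proof. by rewrite /GRing.add /= ffunE. Qed.
Lemma prod_oneE i : (1 : prodR) i = 1. Proof. by rewrite /GRing.one /= ffunE. Qed.
Lemma prod_zeroE i : (0 : prodR) i = 0. Proof. by rewrite /GRing.zero /= ffunE. Qed.
Lemma prod_ext (x y : prodR) : (forall i, x i = y i) -> x = y. Proof. by move=> H; apply/ffunP. Qed.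

Definition proj_fun i (x : prodR) : Q i := x i.
Lemma proj_nmod i : GRing.nmod_morphism (proj_fun i).
Proof. by split; [exact: prod_zeroE | move=> x y; exact: prod_addE]. Qed.
Lemma proj_mon i : GRing.monoid_morphism (proj_fun i).
Proof. by split; [exact: prod_oneE | move=> x y; exact: prod_mulE]. Qed.
Definition projR i : {rmorphism prodR -> Q i} :=
  HB.pack (proj_fun i) (GRing.isNmodMorphism.Build _ _ _ (proj_nmod i)) (GRing.isMonoidMorphism.Build _ _ _ (proj_mon i)).

Variables (R : pzRingType) (phi : forall i, {rmorphism R -> Q i}).
Definition jfun (r : R) : prodR := [ffun i => phi i r].
Lemma j_nmod : GRing.nmod_morphism jfun.
Proof.
split; first by apply: prod_ext => i; rewrite ffunE prod_zeroE rmorph0.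
by move=> x y; apply: prod_ext => i; rewrite prod_addE !ffunE rmorphD.
Qed.
Lemma j_mon : GRing.monoid_morphism jfun.
Proof.
split; first by apply: prod_ext => i; rewrite ffunE prod_oneE rmorph1.
by move=> x y; apply: prod_ext => i; rewrite prod_mulE !ffunE rmorphM.
Qed.
Definition jR : {rmorphism R -> prodR} :=
  HB.pack jfun (GRing.isNmodMorphism.Build _ _ _ j_nmod) (GRing.isMonoidMorphism.Build _ _ _ j_mon).
Lemma jRE r i : jR r i = phi i r. Proof. by rewrite /= /jfun ffunE. Qed.
End P.

Lemma choice_dep (A : Type) (B : A -> Type) (P : forall a, B a -> Prop) :
  (forall a, exists b, P a b) -> exists g : forall a, B a, forall a, P a (g a).
Proof.
move=> H; exists (fun a => proj1_sig (constructive_indefinite_description _ (H a))).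
by move=> a; exact: (proj2_sig (constructive_indefinite_description _ (H a))).
Qed.

Lemma inv_mul (T : pzRingType) (a b : T) : invertible a -> invertible b -> invertible (a * b).
Proof.
move=> [x [ax xa]] [y [bY yb]]; exists (y * x); split.
  by rewrite -mulrA (mulrA b) bY mul1r ax.
by rewrite -mulrA (mulrA x) xa mul1r yb.
Qed.

Lemma prod_inv (n : nat) (Q : 'I_n -> pzRingType) (x : prodR Q) :
  (forall i, invertible (x i)) -> invertible x.
Proof.
move=> H; have [g Hg] := choice_dep H.
exists [ffun i => g i]; split; apply: prod_ext => i; rewrite prod_mulE prod_oneE ffunE; by case: (Hg i).
Qed.


Section Main.
Variables (R : pzRingType) (sd : side) (n : nat)
  (S : 'I_n -> R -> Prop) (Q : 'I_n -> pzRingType)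
  (phi : forall i, {rmorphism R -> Q i}).
Hypotheses (hmult : forall i, mult_set (S i))
  (hloc : forall i, universal_loc (S i) (phi i))
  (hL : forall i, localizable sd (S i) (phi i))
  (hsa : forall i, simple_artinian (Q i))
  (hcap : forall r : R, (forall i, ass (phi i) r) -> r = 0)
  (hcap' : forall i, exists r : R, r <> 0 /\ forall j, j != i -> ass (phi j) r).

Let hinv i s : S i s -> invertible (phi i s) := proj1 (hloc i) s.

Lemma prime_i i : prime_ideal (ass (phi i)).
Proof. exact: (s_prime (hL i) (hsa i)). Qed.

Definition qq i := fun r => forall j, j != i -> ass (phi j) r.

Lemma ideal_inter (P : 'I_n -> bool) : ideal (fun r => forall j, P j -> ass (phi j) r).
Proof.
rewrite /ass; split; (split; first by move=> j _; rewrite rmorph0);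
  (split; first by move=> x y hx hy j Pj; rewrite rmorphD hx // hy // addr0);
  (split; first by move=> x hx j Pj; rewrite rmorphN hx // oppr0);
  by move=> r x hx j Pj; rewrite rmorphM hx // ?mulr0 ?mul0r.
Qed.

Lemma qq_ideal i : ideal (qq i).
Proof. exact: (ideal_inter (fun j => j != i)). Qed.

Lemma qq_not_sub i : ~ (forall x, qq i x -> ass (phi i) x).
Proof.
move=> H; have [r [rn hr]] := hcap' i; apply: rn; apply: hcap => j.
by case: (eqVneq j i) => [->|ji]; [apply: H | apply: hr].
Qed.

Lemma reg_cset c : regular c -> forall i, cset (ass (phi i)) c.
Proof.
move=> rc i a; have [[LP RP] [_ Hp]] := prime_i i.
have [[q0 [qD [qN qL]]] [_ [_ [_ qR]]]] := qq_ideal i.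
have [[_ [_ [_ pL]]] [_ [_ [_ pR]]]] := (LP, RP).
have allz x : qq i x -> ass (phi i) x -> x = 0.
  move=> qx px; apply: hcap => j; case: (eqVneq j i) => [->|ji] //; exact: qx.
split => h.
- pose B := fun b => forall x, qq i x -> x * b = 0.
  have IB : ideal B.
    split; (split; first by move=> x _; rewrite mulr0); (split; first by move=> u v hu hv x qx; rewrite mulrDr hu // hv // addr0);
      (split; first by move=> u hu x qx; rewrite mulrN hu // oppr0).
      by move=> r u hu x qx; rewrite mulrA hu //; exact: qR.
    by move=> r u hu x qx; rewrite mulrA hu // mul0r.
  have Ba : B a.
    move=> x qx; apply: (proj1 (rc _)); rewrite -mulrA; apply: allz; first exact: qR.
    exact: pL.
  case: (Hp _ _ (qq_ideal i) IB) => [x y qx By|H|H].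
  + by rewrite By // /ass rmorph0.
  + by exfalso; apply: (qq_not_sub H).
  + exact: H.
- pose B := fun b => forall x, qq i x -> b * x = 0.
  have IB : ideal B.
    split; (split; first by move=> x _; rewrite mul0r); (split; first by move=> u v hu hv x qx; rewrite mulrDl hu // hv // addr0);
      (split; first by move=> u hu x qx; rewrite mulNr hu // oppr0).
      by move=> r u hu x qx; rewrite -mulrA hu // mulr0.
    by move=> r u hu x qx; rewrite -mulrA hu //; exact: qL.
  have Ba : B a.
    move=> x qx; apply: (proj2 (rc _)); rewrite mulrA; apply: allz; first exact: qL.
    exact: pR.
  case: (Hp _ _ IB (qq_ideal i)) => [x y Bx qy|H|H].
  + by rewrite Bx // /ass rmorph0.
  + exact: H.
  + by exfalso; apply: (qq_not_sub H).
Qed.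

Lemma cset_inv i c : cset (ass (phi i)) c -> invertible (phi i c).
Proof.
move=> hc; apply: (s_inv (hmult i) (@hinv i) (hL i) (hsa i)) => a h.
  exact: (proj1 (hc a)).
exact: (proj2 (hc a)).
Qed.


Lemma inv_to_cset i c : invertible (phi i c) -> cset (ass (phi i)) c.
Proof.
move=> [w [cw wc]] a; rewrite /ass !rmorphM; split => h.
  by rewrite -[phi i a]mulr1 -cw mulrA h mul0r.
by rewrite -[phi i a]mul1r -wc -mulrA h mulr0.
Qed.

Lemma minP_aux (P : R -> Prop) (s : seq 'I_n) : prime_ideal P ->
  (forall x, (forall i, i \in s -> ass (phi i) x) -> P x) -> exists i, forall x, ass (phi i) x -> P x.
Proof.
move=> [IP [[x0 nx0] Hp]]; elim: s => [|i s IH] H.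
  by exfalso; apply: nx0; apply: H.
have [[LA RA] _] := prime_i i.
have IB := ideal_inter (fun j => j \in s).
case: (Hp _ _ (conj LA RA) IB) => [a b pa Bb|HA|HB].
- apply: H => j; rewrite in_cons => /orP [/eqP ->|js].
    by rewrite /ass rmorphM pa mul0r.
  by rewrite /ass rmorphM Bb // mulr0.
- by exists i.
- exact: (IH HB).
Qed.

Lemma part2 (P : R -> Prop) : minimal_prime P <-> exists i, forall x, P x <-> ass (phi i) x.
Proof.
have all0 (P' : R -> Prop) : prime_ideal P' -> exists i, forall x, ass (phi i) x -> P' x.
  move=> hP; have H := @minP_aux P' (enum 'I_n) hP; apply: H => x hx.
  have -> : x = 0 by apply: hcap => i; apply: hx; rewrite mem_enum.
  by have [[[? _] _] _] := hP.
split.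
  move=> [hP hmin]; have [i Hi] := all0 _ hP.
  by exists i => x; split; [apply: (hmin _ (prime_i i) Hi) | apply: Hi].
move=> [i Hi].
have -> : P = ass (phi i) by apply: functional_extensionality => x; apply: propositional_extensionality.
split; first exact: prime_i.
move=> P' hP' sub; have [j Hj] := all0 _ hP'.
case: (eqVneq j i) => [<- //|ji].
exfalso; apply: (qq_not_sub (i := i)) => x qx; apply: sub; apply: Hj; apply: qx.
exact: ji.
Qed.

Lemma part4 i s : S i s -> cset (ass (phi i)) s.
Proof. by move=> Ss; apply: inv_to_cset; exact: hinv. Qed.

Lemma sumE (F : 'I_n -> R) i : (forall k, k != i -> phi i (F k) = 0) ->
  phi i (\sum_(k < n) F k) = phi i (F i).
Proof.
move=> H; rewrite rmorph_sum (bigD1 i) //= big1 ?addr0 // => k ki; exact: H.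
Qed.

Lemma reg_of_inv d : (forall i, invertible (phi i d)) -> regular d.
Proof.
move=> H a; split => e; apply: hcap => i; have [w [dw wd]] := H i; rewrite /ass.
  by rewrite -[phi i a]mulr1 -dw mulrA -rmorphM e rmorph0 mul0r.
by rewrite -[phi i a]mul1r -wd -mulrA -rmorphM e rmorph0 mulr0.
Qed.

Lemma cs_exist : exists c : 'I_n -> R, forall i, qq i (c i) /\ invertible (phi i (c i)).
Proof.
apply: (@choice_fun 'I_n R (fun i c => qq i c /\ invertible (phi i c))) => i.
apply: (s_ideal_unit (hmult i) (@hinv i) (hL i) (hsa i) (qq_ideal i)).
have [r [rn hr]] := hcap' i; exists r; split => // e.
apply: rn; apply: hcap => j; case: (eqVneq j i) => [->|ji] //; exact: hr.
Qed.

Lemma part5 : exists (Qc : pzRingType) (j : {rmorphism R -> Qc}),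
      classical_quotient sd j /\
      exists proj : forall i, {rmorphism Qc -> Q i},
        (forall x, (forall i, proj i x = 0) -> x = 0) /\
        (forall y : forall i, Q i, exists x, forall i, proj i x = y i).
Proof.
have [c Hc] := cs_exist.
have cz k i : k != i -> phi i (c k) = 0.
  by move=> ki; apply: (proj1 (Hc k)); rewrite eq_sym.
pose j := jR phi.
have jinv d : (forall i, invertible (phi i d)) -> invertible (j d).
  by move=> H; apply: prod_inv => i; rewrite jRE.
have fL : sd <> sideR -> forall y, left_frac (@regular R) j y.
  move=> nR y.
  have H1 : forall i, exists p : R * R, S i p.1 /\ phi i p.1 * y i = phi i p.2.
    move=> i; have [s [r [z [Ss [sz [zs ->]]]]]] := s_lfrac (hL i) nR (y i).
    by exists (s, r); split => //=; rewrite mulrA sz mul1r.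
  have [g Hg] := choice_fun H1.
  pose d := \sum_(k < n) c k * (g k).1; pose rr := \sum_(k < n) c k * (g k).2.
  have phid i : phi i d = phi i (c i) * phi i (g i).1.
    by rewrite sumE ?rmorphM // => k ki; rewrite rmorphM cz // mul0r.
  have phir i : phi i rr = phi i (c i) * phi i (g i).2.
    by rewrite sumE ?rmorphM // => k ki; rewrite rmorphM cz // mul0r.
  have invd i : invertible (phi i d) by rewrite phid; apply: inv_mul; [exact: (proj2 (Hc i)) | apply: hinv; exact: (proj1 (Hg i))].
  have [Y [dY Yd]] := jinv d invd.
  exists d, rr, Y; split; first exact: reg_of_inv.
  do 2 (split => //); apply: prod_ext => i.
  rewrite prod_mulE jRE phir -(proj2 (Hg i)) !mulrA -(mulrA (Y i)) -phid.
  by rewrite -[phi i d]jRE -prod_mulE Yd prod_oneE mul1r.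
have fR : sd <> sideL -> forall y, right_frac (@regular R) j y.
  move=> nL y.
  have H1 : forall i, exists p : R * R, S i p.1 /\ y i * phi i p.1 = phi i p.2.
    move=> i; have [s [r [z [Ss [sz [zs ->]]]]]] := s_rfrac (hL i) nL (y i).
    by exists (s, r); split => //=; rewrite -mulrA zs mulr1.
  have [g Hg] := choice_fun H1.
  pose d := \sum_(k < n) (g k).1 * c k; pose rr := \sum_(k < n) (g k).2 * c k.
  have phid i : phi i d = phi i (g i).1 * phi i (c i).
    by rewrite sumE ?rmorphM // => k ki; rewrite rmorphM cz // mulr0.
  have phir i : phi i rr = phi i (g i).2 * phi i (c i).
    by rewrite sumE ?rmorphM // => k ki; rewrite rmorphM cz // mulr0.
  have invd i : invertible (phi i d) by rewrite phid; apply: inv_mul; [apply: hinv; exact: (proj1 (Hg i)) | exact: (proj2 (Hc i))].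
  have [Y [dY Yd]] := jinv d invd.
  exists d, rr, Y; split; first exact: reg_of_inv.
  do 2 (split => //); apply: prod_ext => i.
  rewrite prod_mulE jRE phir -(proj2 (Hg i)) -!mulrA (mulrA (phi i (g i).1)) -phid.
  by rewrite -[phi i d]jRE -prod_mulE dY prod_oneE mulr1.
exists (prodR Q), j; split.
  split.
    move=> x y e; apply/eqP; rewrite -subr_eq0; apply/eqP; apply: hcap => i.
    by rewrite /ass rmorphB -!(jRE phi) -/j e subrr.
  split.
    by move=> cc rc; apply: jinv => i; apply: cset_inv; apply: reg_cset.
  by case E : sd => q /=; [apply: fL; rewrite E | apply: fR; rewrite E | split; [apply: fL | apply: fR]; rewrite E].
exists (projR Q); split.
  by move=> x H; apply: prod_ext => i; rewrite prod_zeroE; exact: (H i).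
by move=> y; exists [ffun i => y i] => i; rewrite /= /proj_fun ffunE.
Qed.

Lemma part6 i : inL sd (cset (ass (phi i))) /\
      forall T : R -> Prop, inL sd T -> (forall x, cset (ass (phi i)) x -> T x) ->
        forall x, T x <-> cset (ass (phi i)) x.
Proof.
have h10 : (1 : Q i) <> 0 := proj1 (proj1 (hsa i)).
have Ssub s : S i s -> cset (ass (phi i)) s := @part4 i s.
split.
  split.
    split; first by move=> a; rewrite mulr1 mul1r.
    split.
      by move=> h; apply: h10; rewrite -(rmorph1 (phi i)); apply: (proj1 (h 1)); rewrite /ass mul1r rmorph0.
    move=> c d hc hd a; split.
      by rewrite mulrA => /(proj1 (hd _)) /(proj1 (hc _)).
    by rewrite -mulrA => /(proj2 (hc _)) /(proj2 (hd _)).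
  exists (Q i), (phi i); split.
    split; first by move=> c; exact: cset_inv.
    by move=> T f finv; apply: (proj2 (hloc i)) => s Ss; apply: finv; exact: Ssub.
  split; first exact: (proj1 (hL i)).
  have [_ hf] := hL i.
  move=> q; move: (hf q); case: sd => /=.
  - by move=> [s [r [y [Ss H]]]]; exists s, r, y; split => //; exact: Ssub.
  - by move=> [s [r [y [Ss H]]]]; exists s, r, y; split => //; exact: Ssub.
  - move=> [[s [r [y [Ss H]]]] [s' [r' [y' [Ss' H']]]]]; split.
      by exists s, r, y; split => //; exact: Ssub.
    by exists s', r', y'; split => //; exact: Ssub.
move=> T [hmT [QT [phiT [[invT univT] [h1T _]]]]] sub x; split; last exact: sub.
move=> Tx.
have [g [gE _]] := proj2 (hloc i) QT phiT (fun s Ss => invT s (sub s (Ssub s Ss))).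
have gK : forall q, g q = 0 -> q = 0.
  pose K := fun q => g q = 0.
  have IK : ideal K.
    rewrite /K; split; (split; first by rewrite rmorph0);
      (split; first by move=> a b ha hb; rewrite rmorphD ha hb addr0);
      (split; first by move=> a ha; rewrite rmorphN ha oppr0);
      by move=> r a ha; rewrite rmorphM ha ?mulr0 ?mul0r.
  case: (proj2 (proj1 (hsa i)) K IK) => // H.
  by exfalso; apply: h1T; rewrite -(rmorph1 g); exact: (H 1).
apply: inv_to_cset; apply: (left_reg_inv (proj2 (hsa i))) => q e.
have [w [tw wt]] := invT x Tx.
apply: gK; rewrite -[g q]mulr1 -tw mulrA -gE -rmorphM e rmorph0 mul0r //.
Qed.

End Main.

Theorem theorem1p13 (R : pzRingType) (sd : side) (n : nat)
  (S : 'I_n -> R -> Prop) (Q : 'I_n -> pzRingType)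
  (phi : forall i, {rmorphism R -> Q i})
  (hmult : forall i, mult_set (S i))
  (hloc : forall i, universal_loc (S i) (phi i))
  (hL : forall i, localizable sd (S i) (phi i))
  (hsa : forall i, simple_artinian (Q i))
  (hcap : forall r : R, (forall i, ass (phi i) r) -> r = 0)
  (hcap' : forall i, exists r : R, r <> 0 /\ forall j, j != i -> ass (phi j) r) :
  (* (1) and (3): for every model R_i = R/p_i of the quotient ring *)
  (forall i (Ri : pzRingType) (pi : {rmorphism R -> Ri}),
      (forall y : Ri, exists r, pi r = y) ->
      (forall r, pi r = 0 <-> ass (phi i) r) ->
      (semiprime Ri /\ goldie Ri sd) /\
      exists psi : {rmorphism Ri -> Q i},
        (forall r, psi (pi r) = phi i r) /\ classical_quotient sd psi) /\
  (* (2) min(R) = {p_1, ..., p_n} *)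
  (forall P : R -> Prop,
      minimal_prime P <-> exists i, forall x, P x <-> ass (phi i) x) /\
  (* (4) S_i ⊆ C(p_i) *)
  (forall i s, S i s -> cset (ass (phi i)) s) /\
  (* (5) Q_{*,cl}(R) ≅ prod_i Q_i *)
  (exists (Qc : pzRingType) (j : {rmorphism R -> Qc}),
      classical_quotient sd j /\
      exists proj : forall i, {rmorphism Qc -> Q i},
        (forall x, (forall i, proj i x = 0) -> x = 0) /\
        (forall y : forall i, Q i, exists x, forall i, proj i x = y i)) /\
  (* (6) C(p_i) ∈ max L_*(R) *)
  (forall i, inL sd (cset (ass (phi i))) /\
      forall T : R -> Prop, inL sd T -> (forall x, cset (ass (phi i)) x -> T x) ->
        forall x, T x <-> cset (ass (phi i)) x).
Proof.
split.
  move=> i Ri pi hs hk.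
  exact: (s_part1 (proj1 (hloc i)) (hL i) (hsa i) hs hk).
split; first exact: (part2 hL hsa hcap hcap').
split; first exact: (part4 hloc).
split; first exact: (part5 hmult hloc hL hsa hcap hcap').
move=> i; apply: part6 => //.
Qed.
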